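(* Let $O=\langle B,E,F,\mathsf c\rangle$ be an occurrence net with associated conflict relation $\#$. Let $B^{\#}=\{\{e,e'\}\mid e\ \#\ e'\}$ (a set of fresh conditions) and $F^{\#}=\{(A,e)\mid A\in B^{\#},\ e\in A\}$. Then $O^{\#}=\langle B\cup B^{\#},E,F\cup F^{\#},\mathsf c\cup B^{\#}\rangle$ is an occurrence net and $O$ and $O^{\#}$ have the same configurations (equivalently, the same states).
   Context: A net $N=\langle S,T,F,\mathsf m\rangle$ consists of disjoint sets $S$ (places) and $T$ (transitions), flow $F\subseteq(S\times T)\cup(T\times S)$ and initial marking $\mathsf m$; ${}^\bullet x=\{y\mid(y,x)\in F\}$, $x^\bullet=\{y\mid(x,y)\in F\}$. $t$ is enabled at $m$ if ${}^\bullet t\subseteq m$; firing yields $m-{}^\bullet t+t^\bullet$. A state is the multiset of transitions of a finite firing sequence from $\mathsf m$; for occurrence nets (identity labelling) configurations are the states. A net is safe if every reachable marking has at most one token per place. $<_N$ is the transitive closure of $F$ and $\le_N$ its reflexive closure; $N$ is acyclic if $\le_N$ is a partial order. An occurrence net $O=\langle B,E,F,\mathsf c\rangle$ is an acyclic safe net such that: for every $b\in B$, ${}^\bullet b$ is empty or a singleton, and ${}^\bullet b=\emptyset$ for $b\in\mathsf c$; for every $b\in B$ there is $b'\in\mathsf c$ with $b'\le_O b$; for every $e\in E$ the set $\{e'\in E\mid e'\le_O e\}$ is finite; and the conflict relation $\#$, defined by $e\ \#_0\ e'$ iff $e\neq e'$ and ${}^\bullet e\cap{}^\bullet e'\neq\emptyset$,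 and $x\ \#\ x'$ iff there are $y\ \#_0\ y'$ with $y\le_O x$, $y'\le_O x'$, is irreflexive. *)

(* Defs.v *)
From Stdlib Require Import List Relations Classical ClassicalEpsilon.
Import ListNotations.

Definition ind (P : Prop) : nat :=
  if excluded_middle_informative P then 1 else 0.

(* A (place/transition) net <S,T,F,m>: S and T are disjoint (distinct types),
   F is split into (S x T) part [pre] and (T x S) part [post];
   the initial marking is a multiset of places. *)
Record Net := mkNet {
  pl : Type;
  tr : Type;
  pre : pl -> tr -> Prop;
  post : tr -> pl -> Prop;
  init : pl -> nat
}.

Section NetDefs.
Variable N : Net.

Definition marking := pl N -> nat.

Definition enabled (m : marking) (t : tr N) : Prop :=
  forall s, pre N s t -> 1 <= m s.

Definition fire (m : marking) (t : tr N) (m' : marking) : Prop :=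
  enabled m t /\ forall s, m' s = m s - ind (pre N s t) + ind (post N t s).

Inductive fseq : list (tr N) -> marking -> Prop :=
| fseq_nil : fseq [] (init N)
| fseq_snoc l m t m' : fseq l m -> fire m t m' -> fseq (l ++ [t]) m'.

Definition reachable (m : marking) : Prop := exists l, fseq l m.

Fixpoint mult (l : list (tr N)) (t : tr N) : nat :=
  match l with
  | [] => 0
  | x :: l' => ind (x = t) + mult l' t
  end.

Definition state (X : tr N -> nat) : Prop :=
  exists l m, fseq l m /\ forall t, X t = mult l t.

Definition safe : Prop :=
  forall m, reachable m -> forall s, m s <= 1.

Definition node := (pl N + tr N)%type.

Definition flow (x y : node) : Prop :=
  match x, y with
  | inl s, inr t => pre N s t
  | inr t, inl s => post N t s
  | _, _ => False
  end.

Definition ltN : node -> node -> Prop := clos_trans node flow.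
Definition leN (x y : node) : Prop := x = y \/ ltN x y.

Definition acyclic : Prop :=
  reflexive node leN /\ transitive node leN /\ antisymmetric node leN.

Definition conflict0 (e e' : tr N) : Prop :=
  e <> e' /\ exists s, pre N s e /\ pre N s e'.

Definition conflict (x x' : node) : Prop :=
  exists y y', conflict0 y y' /\ leN (inr y) x /\ leN (inr y') x'.

End NetDefs.

(* Occurrence net data <B,E,F,c>, c a set of conditions *)
Record ONet := mkONet {
  cond : Type;
  ev : Type;
  opre : cond -> ev -> Prop;
  opost : ev -> cond -> Prop;
  oinit : cond -> Prop
}.

Definition net_of (O : ONet) : Net :=
  mkNet (cond O) (ev O) (opre O) (opost O) (fun b => ind (oinit O b)).

Definition is_occurrence_net (O : ONet) : Prop :=
  let N := net_of O in
  acyclic N /\ safe N /\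
  (forall b (e e' : ev O), opost O e b -> opost O e' b -> e = e') /\
  (forall b, oinit O b -> forall e, ~ opost O e b) /\
  (forall b, exists b', oinit O b' /\ leN N (inl b') (inl b)) /\
  (forall e : ev O, exists l : list (ev O),
      forall e', leN N (inr e') (inr e) -> In e' l) /\
  (forall x : node N, ~ conflict N x x).

Definition configuration (O : ONet) (X : ev O -> nat) : Prop :=
  state (net_of O) X.

(* B^# = { {e,e'} | e # e' }, as fresh conditions (subsets of E) *)
Definition Bsharp (O : ONet) : Type :=
  { A : ev O -> Prop | exists e e' : ev O,
      conflict (net_of O) (inr e) (inr e') /\
      A = (fun x => x = e \/ x = e') }.

Definition sharp (O : ONet) : ONet :=
  mkONet (cond O + Bsharp O)%type (ev O)
    (fun b e => match b with
                | inl b0 => opre O b0 e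
                | inr A => proj1_sig A e
                end)
    (fun e b => match b with
                | inl b0 => opost O e b0
                | inr _ => False
                end)
    (fun b => match b with
              | inl b0 => oinit O b0
              | inr _ => True
              end).

(* Main.v *)
Require Import Defs.
From Stdlib Require Import List Relations Classical ClassicalEpsilon.
From Stdlib Require Import Lia.
Import ListNotations.

Lemma ind_T (P : Prop) : P -> ind P = 1.
Proof. unfold ind; destruct (excluded_middle_informative P); tauto. Qed.
Lemma ind_F (P : Prop) : ~ P -> ind P = 0.
Proof. unfold ind; destruct (excluded_middle_informative P); tauto. Qed.
Lemma ind_le (P : Prop) : ind P <= 1.
Proof. unfold ind; destruct (excluded_middle_informative P); lia. Qed.

Fixpoint cnt {A : Type} (P : A -> Prop) (l : list A) : nat :=
  match l with [] => 0 | x :: l' => ind (P x) + cnt P l' end.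

Lemma cnt_app {A} (P : A -> Prop) l t : cnt P (l ++ [t]) = cnt P l + ind (P t).
Proof. induction l; simpl; lia. Qed.

Lemma cnt_In {A} (P : A -> Prop) l x : In x l -> P x -> 1 <= cnt P l.
Proof.
  induction l as [|a l IH]; simpl; [tauto|]. intros [->|H] Hp.
  - rewrite (ind_T _ Hp); lia.
  - specialize (IH H Hp); lia.
Qed.

Lemma cnt_pos {A} (P : A -> Prop) l : 1 <= cnt P l -> exists x, In x l /\ P x.
Proof.
  induction l as [|a l IH]; simpl; [lia|]. intros H.
  destruct (classic (P a)) as [Ha|Ha]; [exists a; auto|].
  rewrite (ind_F _ Ha) in H. destruct (IH H) as [x [Hx Hp]]; eauto.
Qed.

Lemma cnt2 {A} (P : A -> Prop) l y y' : In y l -> In y' l -> y <> y' -> P y -> P y' ->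
  2 <= cnt P l.
Proof.
  induction l as [|a l IH]; simpl; [tauto|]. intros Hy Hy' Hne Hp Hp'.
  destruct (classic (a = y)) as [E|E].
  - subst a. destruct Hy' as [E'|Hy']; [congruence|].
    rewrite (ind_T _ Hp). pose proof (cnt_In P l y' Hy' Hp'); lia.
  - destruct Hy as [E1|Hy]; [congruence|].
    destruct (classic (a = y')) as [E2|E2].
    + subst a. rewrite (ind_T _ Hp'). pose proof (cnt_In P l y Hy Hp); lia.
    + destruct Hy' as [E3|Hy']; [congruence|]. specialize (IH Hy Hy' Hne Hp Hp'); lia.
Qed.


Lemma inv (O : ONet) (Hocc : is_occurrence_net O) l m :
  fseq (net_of O) l m ->
  (forall b, ind (oinit O b) + cnt (fun x => opost O x b) l = m b + cnt (fun x => opre O b x) l) /\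
  (forall b, ind (oinit O b) + cnt (fun x => opost O x b) l <= 1).
Proof.
  destruct Hocc as [Hac [Hsafe [Hpost [Hinit [Hanc [Hfin Hcf]]]]]].
  intros H. induction H as [| l m t m' H IH Hf].
  - split; intros b; simpl; pose proof (ind_le (oinit O b)); lia.
  - destruct IH as [I1 I2]. destruct Hf as [Hen Heq].
    assert (I1' : forall b, ind (oinit O b) + cnt (fun x => opost O x b) (l ++ [t])
                       = m' b + cnt (fun x => opre O b x) (l ++ [t])).
    { intro b. rewrite !cnt_app, Heq. specialize (I1 b). specialize (Hen b). cbn in Hen |- *.
      destruct (classic (opre O b t)) as [Hp|Hp].
      - rewrite (ind_T _ Hp). specialize (Hen Hp). lia.
      - rewrite (ind_F _ Hp). lia. }
    split; [exact I1'|]. intro b. rewrite cnt_app.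
    destruct (classic (opost O t b)) as [Hp|Hp];
      [|rewrite (ind_F _ Hp); specialize (I2 b); lia].
    assert (Hi : ~ oinit O b) by (intro Hi; exact (Hinit b Hi t Hp)).
    rewrite (ind_F _ Hi).
    assert (E : cnt (fun x => opost O x b) l = 0).
    { destruct (cnt (fun x => opost O x b) l) as [|k] eqn:E; [reflexivity|exfalso].
      destruct (cnt_pos (fun x => opost O x b) l) as [x [Hx Hpx]]; [lia|].
      pose proof (Hpost b x t Hpx Hp) as ->.
      destruct (classic (exists c, opre O c t)) as [[c Hc]|Hnc].
      - specialize (I1 c). specialize (I2 c). specialize (Hen c Hc).
        pose proof (cnt_In (fun x => opre O c x) l t Hx Hc). cbn in Hen. lia.
      - set (m'' := fun s => m' s - ind (pre (net_of O) s t) + ind (post (net_of O) t s)).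
        assert (Hs : fseq (net_of O) ((l ++ [t]) ++ [t]) m'').
        { apply fseq_snoc with m'.
          - apply fseq_snoc with m; [exact H| split; assumption].
          - split; [|intros; reflexivity]. intros s Hs; exfalso; apply Hnc; exists s; exact Hs. }
        pose proof (Hsafe m'' (ex_intro _ _ Hs) b) as Hb. unfold m'' in Hb. cbn in Hb.
        rewrite Heq in Hb. cbn in Hb.
        assert (Hnp : ~ opre O b t) by (intro; apply Hnc; eauto).
        rewrite (ind_F _ Hnp), (ind_T _ Hp) in Hb. lia. }
    rewrite E, (ind_T _ Hp). lia.
Qed.

Lemma pre_src (O : ONet) (Hocc : is_occurrence_net O) l m :
  fseq (net_of O) l m -> forall e c, In e l -> opre O c e ->
  oinit O c \/ exists x, In x l /\ opost O x c.
Proof.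
  intros H. induction H as [| l m t m' H IH Hf]; intros e c Hin Hc; [destruct Hin|].
  apply in_app_or in Hin. destruct Hin as [Hin|Hin].
  - destruct (IH e c Hin Hc) as [?|[x [Hx Hp]]]; [left; auto|right; exists x; split; [apply in_or_app; auto|auto]].
  - destruct Hin as [<-|[]].
    destruct (inv O Hocc l m H) as [I1 _]. specialize (I1 c).
    pose proof (proj1 Hf c Hc) as Hm. cbn in Hm.
    destruct (classic (oinit O c)) as [Hi|Hi]; [left; auto|right].
    rewrite (ind_F _ Hi) in I1.
    destruct (cnt_pos (fun x => opost O x c) l) as [x [Hx Hp]]; [lia|].
    exists x; split; [apply in_or_app; auto|auto].
Qed.

Lemma lt_last (N : Net) u v : ltN N u v -> exists w, flow N w v.
Proof. intro H. apply clos_trans_tn1 in H. destruct H; eauto. Qed.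

Lemma lt_inr_pre (O : ONet) u t : ltN (net_of O) u (inr t) -> exists c, opre O c t.
Proof. intro H. destruct (lt_last _ _ _ H) as [[c|e] Hw]; simpl in Hw; [eauto|contradiction]. Qed.

Lemma lt_inl_post (O : ONet) u c : ltN (net_of O) u (inl c) -> exists z, opost O z c.
Proof. intro H. destruct (lt_last _ _ _ H) as [[c'|e] Hw]; simpl in Hw; [contradiction|eauto]. Qed.

Lemma closure (O : ONet) (Hocc : is_occurrence_net O) l m :
  fseq (net_of O) l m -> forall y v, ltN (net_of O) (inr y) v ->
  (forall e, v = inr e -> In e l -> In y l) /\
  (forall c, v = inl c -> (exists x, In x l /\ opost O x c) -> In y l).
Proof.
  intros Hfs y v H. pose proof Hocc as Hocc'.
  destruct Hocc' as [Hac [Hsafe [Hpost [Hinit [Hanc [Hfin Hcf]]]]]].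
  unfold ltN in H. apply clos_trans_tn1 in H.
  induction H as [v Hfl | u v Hfl Hn IH].
  - destruct v as [c|e]; simpl in Hfl; [|contradiction].
    split; [intros; discriminate|]. intros c0 Heq [x [Hx Hp]].
    injection Heq; intros; subst. rewrite <- (Hpost c0 x y Hp Hfl). exact Hx.
  - destruct IH as [IHe IHc].
    destruct v as [c|e]; destruct u as [c'|e']; simpl in Hfl; try contradiction.
    + split; [intros; discriminate|]. intros c0 Heq [x [Hx Hp]].
      injection Heq; intros; subst. pose proof (Hpost c0 x e' Hp Hfl) as Exe. rewrite Exe in Hx.
      exact (IHe e' eq_refl Hx).
    + split; [|intros; discriminate]. intros e0 Heq Hin. injection Heq; intros; subst.
      destruct (pre_src O Hocc l m Hfs e0 c' Hin Hfl) as [Hi|Hex].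
      * exfalso. apply clos_tn1_trans in Hn. destruct (lt_inl_post O _ _ Hn) as [z Hz].
        exact (Hinit c' Hi z Hz).
      * exact (IHc c' eq_refl Hex).
Qed.

Lemma closure_le (O : ONet) (Hocc : is_occurrence_net O) l m y e :
  fseq (net_of O) l m -> leN (net_of O) (inr y) (inr e) -> In e l -> In y l.
Proof.
  intros Hfs [E|Hlt] Hin.
  - injection E; intros; subst; auto.
  - exact (proj1 (closure O Hocc l m Hfs y _ Hlt) e eq_refl Hin).
Qed.

Lemma conflict_free (O : ONet) (Hocc : is_occurrence_net O) l m e e' :
  fseq (net_of O) l m -> In e l -> In e' l ->
  conflict (net_of O) (inr e) (inr e') -> False.
Proof.
  intros Hfs He He' [y [y' [[Hne [s [Hs Hs']]] [Hle Hle']]]].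
  simpl in Hs, Hs'.
  pose proof (closure_le O Hocc l m y e Hfs Hle He) as Hy.
  pose proof (closure_le O Hocc l m y' e' Hfs Hle' He') as Hy'.
  pose proof (cnt2 (fun x => opre O s x) l y y' Hy Hy' Hne Hs Hs').
  destruct (inv O Hocc l m Hfs) as [I1 I2]. specialize (I1 s). specialize (I2 s). lia.
Qed.

Lemma le_pre (O : ONet) y t : leN (net_of O) (inr y) (inr t) ->
  (exists c, opre O c y) -> exists c, opre O c t.
Proof.
  intros [E|Hlt] H.
  - injection E; intros; subst; auto.
  - exact (lt_inr_pre O _ _ Hlt).
Qed.

Lemma has_pre_l (O : ONet) t x : conflict (net_of O) (inr t) x -> exists c, opre O c t.
Proof.
  intros [y [y' [[Hne [s [Hs Hs']]] [Hle Hle']]]]. apply (le_pre O y t Hle). eauto.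
Qed.

Lemma has_pre_r (O : ONet) t x : conflict (net_of O) x (inr t) -> exists c, opre O c t.
Proof.
  intros [y [y' [[Hne [s [Hs Hs']]] [Hle Hle']]]]. apply (le_pre O y' t Hle'). eauto.
Qed.

Lemma no_double (O : ONet) (Hocc : is_occurrence_net O) l m t c :
  fseq (net_of O) l m -> enabled (net_of O) m t -> In t l -> opre O c t -> False.
Proof.
  intros Hfs Hen Hin Hc.
  destruct (inv O Hocc l m Hfs) as [I1 I2]. specialize (I1 c). specialize (I2 c).
  pose proof (Hen c Hc). pose proof (cnt_In (fun x => opre O c x) l t Hin Hc). cbn in *. lia.
Qed.

Lemma fwd (O : ONet) (Hocc : is_occurrence_net O) l m :
  fseq (net_of O) l m ->
  exists ms : marking (net_of (sharp O)), fseq (net_of (sharp O)) l ms /\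
    (forall b, ms (inl b) = m b) /\
    (forall A : Bsharp O, ms (inr A) =
       if excluded_middle_informative (exists x, In x l /\ proj1_sig A x) then 0 else 1).
Proof.
  intros H. induction H as [| l m t m' H IH Hf].
  - exists (init (net_of (sharp O))). split; [exact (fseq_nil (net_of (sharp O)))|split].
    + intro b; reflexivity.
    + intro A. simpl. unfold ind.
      destruct (excluded_middle_informative True) as [_|n]; [|contradiction (n I)].
      destruct (excluded_middle_informative _) as [[x [[] _]]|_]; reflexivity.
  - destruct IH as [ms [Hms [Hl Hr]]].
    assert (Hfs : fseq (net_of O) (l ++ [t]) m') by (apply fseq_snoc with m; auto).
    assert (Hnone : forall A : Bsharp O, proj1_sig A t -> ~ exists x, In x l /\ proj1_sig A x).
    { intros [A [e [e' [Hc HA]]]] HAt [x [Hx HAx]]. subst A. simpl in HAt, HAx.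
      assert (Hinl : forall z, In z l -> In z (l ++ [t])) by (intros; apply in_or_app; auto).
      assert (Hint : In t (l ++ [t])) by (apply in_or_app; right; simpl; auto).
      destruct HAt as [Et|Et], HAx as [Ex|Ex]; subst.
      - destruct (has_pre_l O e _ Hc) as [c Hc']. exact (no_double O Hocc l m e c H (proj1 Hf) Hx Hc').
      - exact (conflict_free O Hocc _ _ e e' Hfs Hint (Hinl _ Hx) Hc).
      - exact (conflict_free O Hocc _ _ e e' Hfs (Hinl _ Hx) Hint Hc).
      - destruct (has_pre_r O e' _ Hc) as [c Hc']. exact (no_double O Hocc l m e' c H (proj1 Hf) Hx Hc'). }
    exists (fun s => ms s - ind (pre (net_of (sharp O)) s t) + ind (post (net_of (sharp O)) t s)).
    split; [|split].
    + apply fseq_snoc with ms; [exact Hms|]. split; [|intros; reflexivity].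
      intros [b|A] Hs; simpl in Hs.
      * rewrite Hl. exact (proj1 Hf b Hs).
      * rewrite Hr. destruct (excluded_middle_informative _) as [E|E]; [exfalso; exact (Hnone A Hs E)|auto].
    + intro b. cbn. rewrite Hl. rewrite (proj2 Hf b). reflexivity.
    + intro A. cbn. rewrite Hr. rewrite (ind_F False) by auto.
      destruct (classic (proj1_sig A t)) as [HA|HA]; [rewrite ind_T by exact HA | rewrite ind_F by exact HA];
      repeat match goal with |- context [excluded_middle_informative ?P] =>
        destruct (excluded_middle_informative P) as [?E|?E] end; try reflexivity; exfalso.
      all: first
        [ solve [exfalso; eapply Hnone; eauto]
        | solve [apply E0; exists t; split; [apply in_or_app; right; simpl; auto|exact HA]]
        | solve [apply E0; destruct E as [x [Hx Hx']]; exists x; split; [apply in_or_app; auto|auto]]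
        | solve [apply E; destruct E0 as [x [Hx Hx']]; exists x; split; [|auto];
                 apply in_app_or in Hx; destruct Hx as [Hx|[<-|[]]]; [auto|contradiction]] ].
Qed.

Lemma bwd (O : ONet) l (ms : marking (net_of (sharp O))) :
  fseq (net_of (sharp O)) l ms ->
  exists m, fseq (net_of O) l m /\ (forall b, m b = ms (inl b)) /\
    (forall A : Bsharp O, ms (inr A) <= 1).
Proof.
  intros H. induction H as [| l ms t ms' H IH Hf].
  - exists (init (net_of O)). split; [exact (fseq_nil (net_of O))|split].
    + intro b; reflexivity.
    + intro A. apply ind_le.
  - destruct IH as [m [Hm [Hb Hr]]].
    exists (fun b => m b - ind (pre (net_of O) b t) + ind (post (net_of O) t b)).
    split; [|split].
    + apply fseq_snoc with m; [exact Hm|]. split; [|intros; reflexivity].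
      intros b Hs. rewrite Hb. exact (proj1 Hf (inl b) Hs).
    + intro b. rewrite (proj2 Hf (inl b)). rewrite Hb. reflexivity.
    + intro A. rewrite (proj2 Hf (inr A)). specialize (Hr A). cbn.
      rewrite (ind_F False) by auto. lia.
Qed.

Definition emb (O : ONet) (x : node (net_of O)) : node (net_of (sharp O)) :=
  match x with inl b => inl (inl b) | inr e => inr e end.

Lemma flow_emb (O : ONet) x y : flow (net_of O) x y -> flow (net_of (sharp O)) (emb O x) (emb O y).
Proof. destruct x, y; simpl; auto. Qed.

Lemma flow_back (O : ONet) x v : flow (net_of (sharp O)) (emb O x) v ->
  exists y, v = emb O y /\ flow (net_of O) x y.
Proof.
  destruct x as [b|e], v as [[b'|A]|e']; simpl; intro H; try contradiction.
  - exists (inr e'); split; [reflexivity|exact H].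
  - exists (inl b'); split; [reflexivity|exact H].
Qed.

Lemma flow_tgt (O : ONet) u v : flow (net_of (sharp O)) u v -> exists y, v = emb O y.
Proof.
  destruct u as [[b|A]|e], v as [[b'|A']|e']; simpl; intro H; try contradiction.
  - exists (inr e'); reflexivity.
  - exists (inr e'); reflexivity.
  - exists (inl b'); reflexivity.
Qed.

Lemma lt_emb (O : ONet) x y : ltN (net_of O) x y -> ltN (net_of (sharp O)) (emb O x) (emb O y).
Proof.
  intro H; induction H; [apply t_step, flow_emb; auto | eapply t_trans; eauto].
Qed.

Lemma lt_back (O : ONet) x w : ltN (net_of (sharp O)) (emb O x) w ->
  exists y, w = emb O y /\ ltN (net_of O) x y.
Proof.
  intro H. unfold ltN in H. apply clos_trans_tn1 in H. induction H as [v Hf | u v Hf Hn IH].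
  - destruct (flow_back O x v Hf) as [y [-> Hy]]. exists y; split; [reflexivity|apply t_step; auto].
  - destruct IH as [y' [-> Hy']]. destruct (flow_back O y' v Hf) as [y [-> Hy]].
    exists y; split; [reflexivity|]. eapply t_trans; [exact Hy'|apply t_step; exact Hy].
Qed.

Lemma lt_tgt (O : ONet) u v : ltN (net_of (sharp O)) u v -> exists y, v = emb O y.
Proof. intro H. destruct (lt_last _ _ _ H) as [w Hw]. exact (flow_tgt O w v Hw). Qed.

Lemma emb_inj (O : ONet) x y : emb O x = emb O y -> x = y.
Proof. destruct x, y; simpl; intro H; inversion H; auto. Qed.

Lemma le_back (O : ONet) x w : leN (net_of (sharp O)) (emb O x) w ->
  exists y, w = emb O y /\ leN (net_of O) x y.
Proof.
  intros [E|H].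
  - exists x; split; [auto|left; reflexivity].
  - destruct (lt_back O x w H) as [y [-> Hy]]. exists y; split; [reflexivity|right; exact Hy].
Qed.

Lemma le_emb_back (O : ONet) x y : leN (net_of (sharp O)) (emb O x) (emb O y) -> leN (net_of O) x y.
Proof.
  intro H. destruct (le_back O x _ H) as [z [E Hz]]. apply emb_inj in E. subst; exact Hz.
Qed.

Lemma lt_irrefl (O : ONet) (Hocc : is_occurrence_net O) z : ltN (net_of O) z z -> False.
Proof.
  destruct Hocc as [[_ [_ Hanti]] _].
  intro H. unfold ltN in H. apply clos_trans_t1n in H. inversion H as [z0 Hf | w z0 Hf Hr]; subst.
  - destruct z; simpl in Hf; contradiction.
  - assert (E : z = w).
    { apply Hanti; [right; apply t_step; exact Hf | right; apply clos_t1n_trans; exact Hr]. }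
    subst. destruct w; simpl in Hf; contradiction.
Qed.

Theorem mainTheorem9 (O : ONet) :
  is_occurrence_net O ->
  is_occurrence_net (sharp O) /\
  (forall X : ev O -> nat, configuration O X <-> configuration (sharp O) X).
Proof.
  intros Hocc. pose proof Hocc as Hocc'.
  destruct Hocc' as [[Hrefl [Htrans Hanti]] [Hsafe [Hpost [Hinit [Hanc [Hfin Hcf]]]]]].
  split.
  - unfold is_occurrence_net. cbv zeta.
    split; [|split; [|split; [|split; [|split; [|split]]]]].
    + split; [|split].
      * intro x; left; reflexivity.
      * intros x y z [<-|H1] [<-|H2]; [left; auto|right; auto|right; auto|right; eapply t_trans; eauto].
      * intros x y [<-|H1] [E|H2]; auto. exfalso.
        assert (Hxx : ltN (net_of (sharp O)) x x) by (eapply t_trans; eauto).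
        destruct (lt_tgt O _ _ Hxx) as [z ->].
        destruct (lt_back O z _ Hxx) as [y' [E Hy]]. apply emb_inj in E. subst.
        exact (lt_irrefl O Hocc _ Hy).
    + intros ms [l Hl] s. destruct (bwd O l ms Hl) as [m [Hm [Hb Hr]]].
      destruct s as [b|A]; [rewrite <- Hb; exact (Hsafe m (ex_intro _ l Hm) b) | apply Hr].
    + intros [b|A] e e'; simpl; [apply Hpost|contradiction].
    + intros [b|A] Hb e; simpl; [apply Hinit; auto|auto].
    + intros [b|A].
      * destruct (Hanc b) as [b' [Hb' Hle]]. exists (inl b'). split; [exact Hb'|].
        destruct Hle as [E|Hlt].
        -- injection E; intros; subst; left; reflexivity.
        -- right. exact (lt_emb O (inl b') (inl b) Hlt).
      * exists (inr A). split; [exact I|left; reflexivity].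
    + intro e. destruct (Hfin e) as [l Hl]. exists l. intros e' H. apply Hl.
      exact (le_emb_back O (inr e') (inr e) H).
    + intros x [y [y' [[Hne [s [Hs Hs']]] [Hl Hl']]]].
      destruct (le_back O (inr y) x Hl) as [z [-> Hz]].
      pose proof (le_emb_back O (inr y') z Hl') as Hz'.
      destruct s as [b|A].
      * apply (Hcf z). exists y, y'. split; [split; [auto|exists b; split; auto]|auto].
      * destruct A as [A [e [e' [Hc HA]]]]. subst A. simpl in Hs, Hs'.
        destruct Hc as [u [u' [H0 [Hu Hu']]]]. apply (Hcf z). exists u, u'.
        split; [exact H0|].
        assert (Hez : leN (net_of O) (inr e) z /\ leN (net_of O) (inr e') z).
        { destruct Hs as [->| ->], Hs' as [->| ->]; try (exfalso; apply Hne; reflexivity); auto. }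
        destruct Hez as [Hez Hez'].
        split; [exact (Htrans _ _ _ Hu Hez) | exact (Htrans _ _ _ Hu' Hez')].
  - intros X; split; intros [l [m [Hf HX]]].
    + destruct (fwd O Hocc l m Hf) as [ms [Hms _]]. exists l, ms. split; [exact Hms|exact HX].
    + destruct (bwd O l m Hf) as [m' [Hm' _]]. exists l, m'. split; [exact Hm'|exact HX].
Qed.
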